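(* Let $x(t)=(x_1(t),x_2(t))$ solve $\dot x=f(x)$ and $x^u(t)$ solve $\dot x^u=h(x^u)$ on $t\ge0$, where $$f(x_1,x_2)=\begin{bmatrix}-Dx_1+\gamma DP\big(M(x_2+Q^* )-M(Q^* )\big)\\ \beta Dx_1-\beta Dx_2\end{bmatrix},\qquad h(x_1,x_2)=\begin{bmatrix}-Dx_1+\gamma DPM(x_2)\\ \beta Dx_1-\beta Dx_2\end{bmatrix}.$$ If $x^u(0)>x(0)$ elementwise, then $x^u(t)\ge x(t)$ elementwise for all $t\ge0$.
   Context: Finite MDP with states $\mathcal S$, actions $\mathcal A$, kernel $P$, expected reward $R$, discount $\gamma\in[0,1)$; $\beta>0$; $n=|\mathcal S||\mathcal A|$. $D$ is the diagonal matrix of a probability distribution $d>0$ on $\mathcal S\times\mathcal A$; $P$ is the $n\times|\mathcal S|$ matrix with row $(s,a)$ equal to $P(\cdot\mid s,a)$; $M(Q)(s)=\max_aQ(s,a)$; $Q^*=R+\gamma PM(Q^* )$. (Both vector fields are globally Lipschitz, so solutions exist and are unique.) *)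

(* Defs.v *)
From HB Require Import structures.
From mathcomp Require Import all_boot all_order all_algebra.
From mathcomp Require Import all_classical all_reals all_analysis.
Set Implicit Arguments. Unset Strict Implicit. Unset Printing Implicit Defensive.
Import Order.TTheory GRing.Theory Num.Theory.
Import numFieldNormedType.Exports.
Local Open Scope classical_set_scope.
Local Open Scope ring_scope.

(* M(Q)(s) = max_a Q(s,a).  The action set is nonempty (witness a0); the value
   does not depend on a0. *)
Definition Mop (R : realType) (S A : finType) (a0 : A) (Q : S * A -> R) : S -> R :=
  fun s => \big[Num.max/Q (s, a0)]_(a : A) Q (s, a).

Definition Pop (R : realType) (S A : finType) (P : S * A -> S -> R) (v : S -> R)
  : S * A -> R := fun i => \sum_(s' : S) P i s' * v s'.

Definition f1 (R : realType) (S A : finType) (a0 : A) (d : S * A -> R)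
  (P : S * A -> S -> R) (gamma : R) (Qstar : S * A -> R)
  (x1 x2 : S * A -> R) : S * A -> R :=
  fun i => - (d i * x1 i)
    + gamma * (d i * Pop P (fun s => Mop a0 (fun j => x2 j + Qstar j) s
                                   - Mop a0 Qstar s) i).

Definition h1 (R : realType) (S A : finType) (a0 : A) (d : S * A -> R)
  (P : S * A -> S -> R) (gamma : R) (x1 x2 : S * A -> R) : S * A -> R :=
  fun i => - (d i * x1 i) + gamma * (d i * Pop P (Mop a0 x2) i).

Definition g2 (R : realType) (S A : finType) (d : S * A -> R) (beta : R)
  (x1 x2 : S * A -> R) : S * A -> R :=
  fun i => beta * (d i * x1 i) - beta * (d i * x2 i).

Definition solves_on_nonneg (R : realType) (I : Type) (y : R -> I -> R)
  (F : R -> I -> R) : Prop :=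
  (forall i : I, (fun t : R => y t i) @ at_right (0 : R) --> y 0 i) /\
  (forall t : R, 0 < t -> forall i : I,
     is_derive t (1 : R) (fun s : R => y s i) (F t i)).

(* Main.v *)
Require Import Defs.
From HB Require Import structures.
From mathcomp Require Import all_boot all_order all_algebra.
From mathcomp Require Import all_classical all_reals all_analysis.
From mathcomp Require Import ring lra.
Import Order.TTheory GRing.Theory Num.Theory.
Import numFieldNormedType.Exports.
Local Open Scope classical_set_scope.
Local Open Scope ring_scope.

Lemma cont_of_derive (R : realType) (u : R -> R) (t d : R) :
  is_derive t 1 u d -> {for t, continuous u}.
Proof. by move=> [du _]; apply/differentiable_continuous/derivable1_diffP. Qed.

Lemma step_pos (R : realType) (u du : R -> R) (c tau : R) :
  0 < tau -> 0 < u 0 -> u @ 0^'+ --> u 0 ->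
  (forall t : R, 0 < t -> is_derive t (1:R) u (du t)) ->
  (forall t : R, 0 < t < tau -> - (c * u t) <= du t) -> 0 < u tau.
Proof.
move=> tau0 u0 uc0 ud hd.
pose ex := fun s : R => expR (c * s).
have dex (t : R) : is_derive t (1:R) ex (c * expR (c * t)).
  have h1 : is_derive t (1:R) (fun s : R => c * s) c.
    have := @is_deriveZ R R R id c t 1 1 (is_derive_id _ _).
    by rewrite /GRing.scale /= mulr1.
  rewrite mulrC; apply: (@is_derive1_comp R expR (fun s => c * s)).
pose g := fun s => ex s * u s.
have dg (t : R) : 0 < t -> is_derive t (1:R) g (ex t * du t + u t * (c * expR (c * t))).
  by move=> t0; have := is_deriveM (dex t) (ud t t0).
have cg : {within `[0, tau], continuous g}.
  apply/continuous_within_itvP => //; split.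
  - move=> x; rewrite in_itv /= => /andP[x0 _].
    exact: cont_of_derive (dg x x0).
  - apply: cvgM; last exact: uc0.
    apply: cvg_at_right_filter; apply: continuous_comp; last exact: continuous_expR.
    exact: mulrl_continuous.
  - apply: cvg_at_left_filter; exact: cont_of_derive (dg tau tau0).
have dg' : forall x, x \in `]0, tau[ -> is_derive x (1:R) g
    (ex x * du x + u x * (c * expR (c * x))).
  by move=> x; rewrite in_itv /= => /andP[x0 _]; apply: dg.
have [x] := MVT tau0 dg' cg.
rewrite in_itv /= => /andP[x0 xt] E.
have : 0 <= g tau - g 0.
  rewrite E; apply: mulr_ge0; last by rewrite subr_ge0 ltW.
  have := hd x; rewrite x0 xt => /(_ isT) hx.
  have -> : u x * (c * expR (c * x)) = expR (c * x) * (c * u x) by ring.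
  rewrite /ex -mulrDr mulr_ge0 ?expR_ge0 //.
  by rewrite -subr_ge0 opprK in hx.
rewrite subr_ge0 /g /ex mulr0 expR0 mul1r => h.
have := lt_le_trans u0 h.
by rewrite pmulr_rgt0 // expR_gt0.
Qed.
Lemma near_right_delta (R : realType) (tau : R) (P : R -> Prop) :
  (\forall s \near tau^'+, P s) -> exists2 r : R, 0 < r & forall s, tau < s < tau + r -> P s.
Proof.
rewrite /at_right near_withinE => /nbhs_ballP [r /= r0 Hr].
exists r => // s /andP[ts tsr]; apply: Hr => //.
rewrite /ball /= ltr_norml; apply/andP; split; lra.
Qed.

Lemma pos_forever (R : realType) (I : finType) (e E : R -> I -> R) (c : I -> R) :
  (forall i, 0 < e 0 i) ->
  (forall i, (fun t => e t i) @ 0^'+ --> e 0 i) ->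
  (forall t : R, 0 < t -> forall i, is_derive t (1:R) (fun s => e s i) (E t i)) ->
  (forall t : R, 0 < t -> (forall j, 0 <= e t j) -> forall i, - (c i * e t i) <= E t i) ->
  forall t : R, 0 <= t -> forall i, 0 < e t i.
Proof.
move=> e0 ec0 ed hq t0 t00 i0.
case: (ltP 0 (e t0 i0)) => // le0; exfalso.
pose G := [set t : R | 0 <= t /\ forall s, 0 <= s <= t -> forall i, 0 < e s i].
have G0 : G 0.
  split => // s /andP[s0 s0']; have -> : s = 0 by apply/le_anti; rewrite s0 s0'.
  exact: e0.
have Gub : ubound G t0.
  move=> t [t0' Ht]; rewrite leNgt; apply/negP => tt.
  have := Ht t0; rewrite t00 ltW // => /(_ isT i0); rewrite ltNge le0 //.
have hs : has_sup G by split; [exists 0 | exists t0].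
set tau := sup G.
have tau0 : 0 <= tau := sup_upper_bound hs G0.
have A : forall s, 0 <= s < tau -> forall i, 0 < e s i.
  move=> s /andP[s0 st].
  have sp : 0 < tau - s by rewrite subr_gt0.
  have [g [g0 Hg] sg] := @sup_adherent R G (tau - s) sp hs.
  apply: Hg; rewrite s0 /=; rewrite /tau in sg; lra.
have B : forall i, 0 < e tau i.
  move=> i; case: (eqVneq tau 0) => [->|tn0]; first exact: e0.
  have taup : 0 < tau by rewrite lt_neqAle eq_sym tn0.
  apply: (@step_pos R (fun s => e s i) (E ^~ i) (c i) tau taup (e0 i) (ec0 i)).
    by move=> t t0'; apply: ed.
  move=> t /andP[t0' tt]; apply: hq => // j; apply/ltW/A; rewrite tt ltW //.

have C : forall i, (fun s => e s i) @ tau^'+ --> e tau i.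
  move=> k; case: (eqVneq tau 0) => [->|tn0]; first exact: ec0.
  have taup : 0 < tau by rewrite lt_neqAle eq_sym tn0.
  apply: cvg_at_right_filter; exact: (@cont_of_derive R _ _ _ (ed tau taup k)).
have D : \forall s \near tau^'+, forall i, 0 < e s i.
  apply: filter_forall => i; exact: (@cvgr_gt _ _ _ _ _ _ (C i) 0 (B i)).
have [r r0 Hr] := @near_right_delta R tau _ D.
have Gs1 : G (tau + r / 2).
  split; first lra.
  move=> s /andP[s0 s1].
  case: (ltgtP s tau) => [st|ts|->]; first by apply: A; rewrite s0 st.
    by apply: Hr; rewrite ts /=; lra.
  exact: B.
have := sup_upper_bound hs Gs1; rewrite -/tau; lra.
Qed.

Lemma Mop_ge (R : realType) (S A : finType) (a0 : A) (Q : S * A -> R) s a :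
  Q (s, a) <= Mop a0 Q s.
Proof.
by rewrite /Mop (bigD1 a) //= le_max lexx.
Qed.

Lemma Mop_le (R : realType) (S A : finType) (a0 : A) (Q : S * A -> R) s b :
  (forall a, Q (s, a) <= b) -> Mop a0 Q s <= b.
Proof.
move=> H; rewrite /Mop; apply: (big_ind (fun x => x <= b)) => //.
by move=> x y xb yb; rewrite ge_max xb yb.
Qed.

Lemma Pop_mono (R : realType) (S A : finType) (P : S * A -> S -> R) (v w : S -> R) i :
  (forall i s', 0 <= P i s') -> (forall s, v s <= w s) -> Pop P v i <= Pop P w i.
Proof.
move=> P0 vw; rewrite /Pop; apply: ler_sum => s _; exact: ler_wpM2l.
Qed.

Theorem mainTheorem9 (R : realType) (S A : finType) (a0 : A)
  (P : S * A -> S -> R) (Rew : S * A -> R) (gamma beta : R)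
  (d : S * A -> R) (Qstar : S * A -> R)
  (x1 x2 xu1 xu2 : R -> S * A -> R) :
  (forall i s', 0 <= P i s') -> (forall i, \sum_(s' : S) P i s' = 1) ->
  0 <= gamma -> gamma < 1 -> 0 < beta ->
  (forall i, 0 < d i) -> \sum_(i : S * A) d i = 1 ->
  (forall i, Qstar i = Rew i + gamma * Pop P (Mop a0 Qstar) i) ->
  solves_on_nonneg x1 (fun t => f1 a0 d P gamma Qstar (x1 t) (x2 t)) ->
  solves_on_nonneg x2 (fun t => g2 d beta (x1 t) (x2 t)) ->
  solves_on_nonneg xu1 (fun t => h1 a0 d P gamma (xu1 t) (xu2 t)) ->
  solves_on_nonneg xu2 (fun t => g2 d beta (xu1 t) (xu2 t)) ->
  (forall i, x1 0 i < xu1 0 i) -> (forall i, x2 0 i < xu2 0 i) ->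
  forall t, 0 <= t -> forall i, x1 t i <= xu1 t i /\ x2 t i <= xu2 t i.
Proof.
move=> P0 P1 g0 g1 b0 d0 d1 Qs [x1c x1d] [x2c x2d] [u1c u1d] [u2c u2d] i1 i2.
pose e := fun (t : R) (k : (S * A) + (S * A)) =>
  match k with inl i => xu1 t i - x1 t i | inr i => xu2 t i - x2 t i end.
pose E := fun (t : R) (k : (S * A) + (S * A)) =>
  match k with
  | inl i => h1 a0 d P gamma (xu1 t) (xu2 t) i - f1 a0 d P gamma Qstar (x1 t) (x2 t) i
  | inr i => g2 d beta (xu1 t) (xu2 t) i - g2 d beta (x1 t) (x2 t) i end.
pose c := fun k : (S * A) + (S * A) =>
  match k with inl i => d i | inr i => beta * d i end.
have key := @pos_forever R _ e E c.
have H : forall t : R, 0 <= t -> forall k, 0 < e t k.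
  apply: key.
  - by case=> i /=; rewrite subr_gt0.
  - by case=> i /=; apply: cvgB.
  - by move=> t t0 [] i /=; apply: is_deriveB; [apply: u1d | apply: x1d | apply: u2d | apply: x2d].
  - move=> t t0 pos [] i /=.
    + have e2 : forall s, x2 t s <= xu2 t s.
        by move=> s; have := pos (inr s); rewrite /= subr_ge0.
      have hm : Pop P (fun s => Mop a0 (fun j => x2 t j + Qstar j) s - Mop a0 Qstar s) i
                <= Pop P (Mop a0 (xu2 t)) i.
        apply: Pop_mono => // s; rewrite lerBlDr; apply: Mop_le => a.
        apply: lerD; [exact: le_trans (e2 _) (@Mop_ge _ _ _ a0 (xu2 t) s a) | exact: Mop_ge].
      rewrite /h1 /f1.
      set a := Pop P (Mop a0 (xu2 t)) i in hm *.
      set b := Pop P _ i in hm *.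
      have h : 0 <= gamma * (d i * (a - b)).
        by apply: mulr_ge0 => //; apply: mulr_ge0; [exact: ltW | rewrite subr_ge0].
      rewrite -subr_ge0.
      have -> : - (d i * xu1 t i) + gamma * (d i * a) - (- (d i * x1 t i) + gamma * (d i * b))
         - - (d i * (xu1 t i - x1 t i)) = gamma * (d i * (a - b)) by ring.
      exact: h.
    + have e1 : 0 <= xu1 t i - x1 t i by exact: (pos (inl i)).
      have h : 0 <= beta * d i * (xu1 t i - x1 t i).
        by apply: mulr_ge0 => //; apply: mulr_ge0; exact: ltW.
      rewrite /g2 -subr_ge0.
      have -> : beta * (d i * xu1 t i) - beta * (d i * xu2 t i) -
        (beta * (d i * x1 t i) - beta * (d i * x2 t i)) - - (beta * d i * (xu2 t i - x2 t i))
        = beta * d i * (xu1 t i - x1 t i) by ring.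
      exact: h.
move=> t t0 i; split.
  by have := H t t0 (inl i); rewrite /= subr_gt0 => /ltW.
by have := H t t0 (inr i); rewrite /= subr_gt0 => /ltW.
Qed.
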